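(* In the setting of the context, let $\omega\in\mathcal{C}$ and put $\kappa:=\frac{\omega^2}{c-id\omega-\omega^2}$, $\lambda:=\omega^2$. Define $\epsilon_0$ as follows. If $\kappa_\Re=0$, $$\epsilon_0:=\sqrt{\min_{\beta\in W(B)}|\beta\kappa_\Im+\lambda_\Im|^2+\min_{\alpha\in W(A)}|\alpha-\lambda_\Re|^2}.$$ If $\kappa_\Re\neq0$, let $\beta_{\inf}$ and $\beta_{\sup}$ be the values in $\overline{W(B)}$ closest to $-\frac{\kappa_\Im\lambda_\Im-\kappa_\Re(\inf W(A)-\lambda_\Re)}{|\kappa|^2}$ and $-\frac{\kappa_\Im\lambda_\Im-\kappa_\Re(\sup W(A)-\lambda_\Re)}{|\kappa|^2}$, respectively, and let $\mathcal{B}:=\left[\frac{\inf W(A)-\lambda_\Re}{\kappa_\Re},\frac{\sup W(A)-\lambda_\Re}{\kappa_\Re}\right]$. If $\mathcal{B}\cap\overline{W(B)}=\emptyset$ set $\Omega':=\{(\inf W(A),\beta_{\inf}),(\sup W(A),\beta_{\sup})\}$; if $\mathcal{B}\cap\overline{W(B)}\neq\emptyset$ set $\Omega':=\{(\inf W(A),\beta_{\inf}),(\sup W(A),\beta_{\sup}),(\alpha_{op},\beta_{op})\}$, where $\beta_{op}$ is the value in $\mathcal{B}\cap\overline{W(B)}$ closest to $-\lambda_\Im/\kappa_\Im$ (arbitrary in $\mathcal{B}\cap\overline{W(B)}$ if $\kappa_\Im=0$) and $\alpha_{op}:=\beta_{op}\kappa_\Re+\lambda_\Re$; then $$\epsilon_0:=\min_{(\alpha,\beta)\in\Omega'}\sqrt{|\beta\kappa_\Im+\lambda_\Im|^2+|\alpha-\kappa_\Re\beta-\lambda_\Re|^2}.$$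 Then $\omega\in W^\epsilon_\Omega(T)$ if and only if $\epsilon>\epsilon_0$.
   Context: Let $\mathcal{H}$ be a Hilbert space, $A$ a selfadjoint (possibly unbounded) operator in $\mathcal{H}$ and $B$ a nonzero bounded selfadjoint operator. Let $c\ge0$, $d>0$, $\delta_\pm:=\pm\sqrt{c-d^2/4}-id/2$ (principal square root), $\mathcal{C}:=\mathbb{C}\setminus\{\delta_+,\delta_-\}$. $W(A),W(B)$ are numerical ranges; for $z\in\mathbb{C}$, $z_\Re,z_\Im$ are real and imaginary parts. For real $\alpha,\beta$ let $t_{(\alpha,\beta)}(\omega):=\alpha-\omega^2-\frac{\omega^2}{c-id\omega-\omega^2}\beta$ and $p_{(\alpha,\beta)}(\omega):=(\alpha-\omega^2)(c-id\omega-\omega^2)-\beta\omega^2$, with roots $r_1,\dots,r_4$ labelled continuously in $(\alpha,\beta)$ and extended by limits to $\overline{\mathbb{R}}\times\mathbb{R}$, values in $\overline{\mathbb{C}}$. $\Omega:=\overline{W(A)}\times\overline{W(B)}$ (closure of $W(A)$ in $\overline{\mathbb{R}}=\mathbb{R}\cup\{\pm\infty\}$), $W_\Omega(T):=\bigcup_n r_n(\Omega)$, and for $\epsilon>0$, $W^\epsilon_\Omega(T):=W_\Omega(T)\cup\{\omega\in\mathcal{C}\setminus W_\Omega(T):\exists(\alpha,\beta)\in\Omega,\ |t_{(\alpha,\beta)}(\omega)|<\epsilon\}$. *)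

(* Defs.v *)
From HB Require Import structures.
From mathcomp Require Import all_boot all_order all_algebra.
From mathcomp Require Import all_classical all_reals all_analysis.
From mathcomp Require Import complex.
Set Implicit Arguments. Unset Strict Implicit. Unset Printing Implicit Defensive.
Import Order.TTheory GRing.Theory Num.Theory.
Import numFieldNormedType.Exports.
Local Open Scope classical_set_scope.
Local Open Scope ring_scope.

Section Hilbert.
Variables (R : realType) (H : lmodType R[i]) (ip : H -> H -> R[i]).

Definition hnorm (x : H) : R := Num.sqrt (complex.Re (ip x x)).

Definition is_hilbert : Prop :=
  [/\ (forall (a : R[i]) (x y z : H), ip (a *: x + y) z = a * ip x z + ip y z),
      (forall x y : H, ip y x = conjc (ip x y)),
      (forall x : H, x != 0 -> 0 < complex.Re (ip x x)) &
      (forall u : nat -> H,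
         (forall e : R, 0 < e -> exists N : nat, forall m n : nat,
              (N <= m)%N -> (N <= n)%N -> hnorm (u m - u n) < e) ->
         exists l : H, forall e : R, 0 < e -> exists N : nat, forall n : nat,
              (N <= n)%N -> hnorm (u n - l) < e)].

(* (possibly unbounded) selfadjoint operator A with domain D:
   D a subspace, A linear on D, D dense, and A^* = A, i.e.
   D(A^* ) = D and A^* y = A y, where y \in D(A^* ) with A^* y = z iff
   <A x, y> = <x, z> for all x \in D. *)
Definition selfadjoint (D : set H) (A : H -> H) : Prop :=
  [/\ D 0, (forall (a : R[i]) x y, D x -> D y -> D (a *: x + y)),
      (forall (a : R[i]) x y, D x -> D y -> A (a *: x + y) = a *: A x + A y),
      (forall x (e : R), 0 < e -> exists2 y, D y & hnorm (x - y) < e) &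
      (forall y z : H, (forall x, D x -> ip (A x) y = ip x z) <-> (D y /\ z = A y))].

Definition bounded_selfadjoint (B : H -> H) : Prop :=
  [/\ (forall (a : R[i]) x y, B (a *: x + y) = a *: B x + B y),
      (exists M : R, forall x, hnorm (B x) <= M * hnorm x) &
      (forall x y, ip (B x) y = ip x (B y))].

Definition numrange (D : set H) (A : H -> H) : set R[i] :=
  [set z | exists x, [/\ D x, hnorm x = 1 & z = ip (A x) x]].

Definition numrangeR (D : set H) (A : H -> H) : set R :=
  [set r : R | numrange D A (r%:C)%C].

End Hilbert.

Section Spectral.
Variables (R : realType) (c d : R).
Local Notation C := R[i].

Definition iC : C := Complex 0 1.

Definition psqrt (x : R) : C :=
  if 0 <= x then ((Num.sqrt x)%:C)%C else iC * ((Num.sqrt (- x))%:C)%C.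

Definition delta_p : C := psqrt (c - d ^+ 2 / 4) - iC * ((d / 2)%:C)%C.
Definition delta_m : C := - psqrt (c - d ^+ 2 / 4) - iC * ((d / 2)%:C)%C.

Definition calC : set C := [set w | w <> delta_p /\ w <> delta_m].

Definition denom (w : C) : C := (c%:C)%C - iC * (d%:C)%C * w - w ^+ 2.

Definition tfun (alpha beta : R) (w : C) : C :=
  (alpha%:C)%C - w ^+ 2 - w ^+ 2 / denom w * (beta%:C)%C.

Definition pfun (alpha beta : R) (w : C) : C :=
  ((alpha%:C)%C - w ^+ 2) * denom w - (beta%:C)%C * w ^+ 2.

Variables (WA WB : set R).

(* first component of Omega: closure of W(A) in the extended reals *)
Definition OmegaA : set (\bar R) := closure [set (x%:E)%E | x in WA].
Definition OmegaB : set R := closure WB.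

(* W_Omega(T): union of the root curves r_n(Omega).  For finite alpha these
   are the roots of p_{(alpha,beta)}; for alpha = +-oo the limits of the
   roots are delta_+, delta_- and the point infinity (not in C). *)
Definition WOmega : set C :=
  [set w | exists alpha beta, [/\ OmegaA (alpha%:E)%E, OmegaB beta &
                                  pfun alpha beta w = 0]]
  `|` [set w | (OmegaA +oo%E \/ OmegaA -oo%E) /\ (w = delta_p \/ w = delta_m)].

(* W^eps_Omega(T); for alpha = +-oo, |t_{(alpha,beta)}(omega)| is infinite,
   so only finite alpha can give |t| < eps *)
Definition Weps (eps : R) : set C :=
  WOmega `|` [set w | [/\ calC w, ~ WOmega w &
     exists alpha beta, [/\ OmegaA (alpha%:E)%E, OmegaB beta &
                            `|tfun alpha beta w| < (eps%:C)%C]]].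

Section Eps0.
Variable w : C.
Definition kappa : C := w ^+ 2 / denom w.
Definition lambda : C := w ^+ 2.
Definition kR : R := complex.Re kappa.
Definition kI : R := complex.Im kappa.
Definition lR : R := complex.Re lambda.
Definition lI : R := complex.Im lambda.
Definition kabs2 : R := kR ^+ 2 + kI ^+ 2.

Definition infA : \bar R := ereal_inf [set (x%:E)%E | x in WA].
Definition supA : \bar R := ereal_sup [set (x%:E)%E | x in WA].

(* the targets whose closest points in closure W(B) are beta_inf, beta_sup *)
Definition target (a : \bar R) : \bar R :=
  (- ((kI * lI)%:E - (kR)%:E * (a - lR%:E)) * (kabs2^-1)%:E)%E.

Definition closest (S : set R) (t : \bar R) (b : R) : Prop :=
  S b /\ forall x, S x -> (`|b%:E - t| <= `|x%:E - t|)%E.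

(* the interval \mathcal B (endpoints taken in increasing order) *)
Definition Bset : set R :=
  let e1 := ((infA - lR%:E) * (kR^-1)%:E)%E in
  let e2 := ((supA - lR%:E) * (kR^-1)%:E)%E in
  [set x : R | (Order.min e1 e2 <= x%:E <= Order.max e1 e2)%E].

Definition BW : set R := Bset `&` OmegaB.

Definition term (a : \bar R) (b : R) : \bar R :=
  match a with
  | (x%:E)%E => (Num.sqrt ((b * kI + lI) ^+ 2 + (x - kR * b - lR) ^+ 2))%:E
  | _ => +oo%E
  end.

Definition eps0 (binf bsup bop : R) : \bar R :=
  if kR == 0 then
    (Num.sqrt (inf [set (b * kI + lI) ^+ 2 | b in WB]
               + inf [set (a - lR) ^+ 2 | a in WA]))%:E
  else
    let m := Order.min (term infA binf) (term supA bsup) in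
    if pselect (BW = set0) then m
    else Order.min m (term ((bop * kR + lR)%:E)%E bop).

(* the (uniquely determined, resp. arbitrary when kI = 0) choices of
   beta_inf, beta_sup, beta_op made in the definition of eps0 *)
Definition eps0_choices (binf bsup bop : R) : Prop :=
  kR != 0 ->
  [/\ closest OmegaB (target infA) binf,
      closest OmegaB (target supA) bsup &
      (BW !=set0 -> BW bop /\ (kI != 0 -> closest BW ((- lI / kI)%:E)%E bop))].
End Eps0.
End Spectral.

(* Main.v *)
Require Import Defs.
From HB Require Import structures.
From mathcomp Require Import all_boot all_order all_algebra.
From mathcomp Require Import all_classical all_reals all_analysis.
From mathcomp Require Import complex.
From mathcomp Require Import ring lra.
Import Order.TTheory GRing.Theory Num.Theory.
Import numFieldNormedType.Exports.
Local Open Scope classical_set_scope.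
Local Open Scope ring_scope.
Set Implicit Arguments. Unset Strict Implicit. Unset Printing Implicit Defensive.
Section Cx.
Variable R : realType.
Local Open Scope complex_scope.
Lemma ReM_real (s : R) (e : R[i]) : complex.Re (s%:C * e)%C = s * complex.Re e.
Proof. case: e => e1 e2 /=; simpc; ring. Qed.
Lemma ImM_real (s : R) (e : R[i]) : complex.Im (s%:C * e)%C = s * complex.Im e.
Proof. case: e => e1 e2 /=; simpc; ring. Qed.
Lemma ReD (x y : R[i]) : complex.Re (x + y) = complex.Re x + complex.Re y.
Proof. by case: x y => ? ? [? ?]. Qed.
Lemma Im0_real (e : R[i]) : complex.Im e = 0 -> e = ((complex.Re e)%:C)%C.
Proof. by case: e => e1 e2 /= ->. Qed.
End Cx.

Section Hilb.
Variables (R : realType) (H : lmodType R[i]) (ip : H -> H -> R[i]).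
Local Open Scope complex_scope.
Hypothesis hH : is_hilbert ip.

Lemma ipD1 x y z : ip (x + y) z = ip x z + ip y z.
Proof. by case: hH => h _ _ _; have := h 1 x y z; rewrite scale1r mul1r. Qed.
Lemma ip0l z : ip 0 z = 0.
Proof.
have h := ipD1 0 0 z; rewrite addr0 in h.
by apply: (addrI (ip 0 z)); rewrite addr0 -h.
Qed.
Lemma ipZ1 a x z : ip (a *: x) z = a * ip x z.
Proof. by case: hH => h _ _ _; have := h a x 0 z; rewrite addr0 ip0l addr0. Qed.
Lemma ipZ2 a x z : ip z (a *: x) = conjc a * ip z x.
Proof.
case: hH => _ hc _ _; rewrite hc ipZ1 rmorphM /= -hc; congr (_ * _).
Qed.
Lemma ipD2 x y z : ip z (x + y) = ip z x + ip z y.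
Proof. case: hH => _ hc _ _; by rewrite hc ipD1 rmorphD /= -!hc. Qed.
Lemma ipZZ (r : R) x y : ip (r%:C *: x) (r%:C *: y) = ((r ^+ 2)%:C * ip x y)%C.
Proof.
rewrite ipZ1 ipZ2; have -> : conjc (r%:C) = r%:C :> R[i].
  by apply/eqP; rewrite eq_complex /= oppr0 !eqxx.
by rewrite mulrA -rmorphM /= expr2.
Qed.

Variables (D : set H) (A : H -> H).
Hypotheses (HD0 : D 0) (HDl : forall a x y, D x -> D y -> D (a *: x + y))
  (HAl : forall a x y, D x -> D y -> A (a *: x + y) = a *: A x + A y)
  (Hsym : forall x, D x -> ip (A x) x = ip x (A x)).

Lemma DZ a x : D x -> D (a *: x).
Proof. by move=> Dx; rewrite -[_ *: _]addr0; apply: HDl. Qed.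
Lemma DD x y : D x -> D y -> D (x + y).
Proof. by move=> Dx Dy; have := HDl 1 Dx Dy; rewrite scale1r. Qed.
Lemma A0 : A 0 = 0.
Proof.
have h := HAl 1 HD0 HD0; rewrite !scale1r addr0 in h.
by apply: (addrI (A 0)); rewrite addr0 -h.
Qed.
Lemma AZ a x : D x -> A (a *: x) = a *: A x.
Proof. by move=> Dx; have := HAl a Dx HD0; rewrite !addr0 A0 addr0. Qed.
Lemma AD x y : D x -> D y -> A (x + y) = A x + A y.
Proof. by move=> Dx Dy; have := HAl 1 Dx Dy; rewrite !scale1r. Qed.

Lemma ImQ x : D x -> complex.Im (ip (A x) x) = 0.
Proof.
move=> Dx; have := Hsym Dx; case: hH => _ hc _ _; rewrite [ip x _]hc.
case: (ip (A x) x) => e1 e2 /= [] /eqP; rewrite -subr_eq0 opprK -mulr2n.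
by rewrite mulrn_eq0 /= => /eqP.
Qed.

Lemma Npos x : x != 0 -> 0 < complex.Re (ip x x).
Proof. by case: hH => _ _ hp _; apply: hp. Qed.

Lemma in_numrange z : D z -> z != 0 ->
  numrangeR ip D A (complex.Re (ip (A z) z) / complex.Re (ip z z)).
Proof.
move=> Dz z0; have N0 := Npos z0; set N := complex.Re (ip z z) in N0 *.
set r := (Num.sqrt N)^-1.
have r2 : r ^+ 2 = N^-1 by rewrite exprVn sqr_sqrtr // ltW.
exists ((r%:C)%C *: z); split; first exact: DZ.
  by rewrite /hnorm ipZZ ReM_real r2 -/N mulVf ?sqrtr1 // gt_eqF.
by rewrite AZ // ipZZ (Im0_real (ImQ Dz)) -rmorphM /= r2 mulrC.
Qed.

Lemma ipLin (s t : R) p q u v :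
  ip (s%:C *: p + t%:C *: q) (s%:C *: u + t%:C *: v) =
  (s ^+ 2)%:C * ip p u + (s * t)%:C * (ip p v + ip q u) + (t ^+ 2)%:C * ip q v.
Proof.
have cR (r : R) : conjc (r%:C) = r%:C.
  by apply/eqP; rewrite eq_complex /= oppr0 !eqxx.
rewrite ipD1 !ipD2 !ipZ1 !ipZ2 !cR !rmorphXn !rmorphM /=; ring.
Qed.

Lemma ReLin (s t : R) p q u v :
  complex.Re (ip (s%:C *: p + t%:C *: q) (s%:C *: u + t%:C *: v)) =
  s ^+ 2 * complex.Re (ip p u) + s * t * complex.Re (ip p v + ip q u)
  + t ^+ 2 * complex.Re (ip q v).
Proof. rewrite ipLin; move: (ip p u) (ip p v) (ip q u) (ip q v) => [a1 a2] [b1 b2] [c1 c2] [d1 d2] /=; simpc; ring. Qed.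

Lemma N1 u : hnorm ip u = 1 -> complex.Re (ip u u) = 1.
Proof.
rewrite /hnorm => h.
have ge0 : 0 <= complex.Re (ip u u).
  have [->|u0] := eqVneq u 0; first by rewrite ip0l.
  exact/ltW/Npos.
by rewrite -(sqr_sqrtr ge0) h expr1n.
Qed.

Lemma numrange_conv (a b x : R) :
  numrangeR ip D A a -> numrangeR ip D A b -> a < x < b -> numrangeR ip D A x.
Proof.
move=> [u [Du nu ha]] [v [Dv nv hb]] /andP[ax xb].
have Nu := N1 nu; have Nv := N1 nv.
have Qu : complex.Re (ip (A u) u) = a by rewrite -ha.
have Qv : complex.Re (ip (A v) v) = b by rewrite -hb.
set K := complex.Re (ip (A u) v + ip (A v) u).
set M := complex.Re (ip u v + ip v u).
pose z (t : R) := (1 - t)%:C *: u + t%:C *: v.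
have Dz t : D (z t) by apply: HDl => //; exact: DZ.
have Az t : A (z t) = (1 - t)%:C *: A u + t%:C *: A v.
  by rewrite /z HAl ?AZ //; exact: DZ.
pose p : {poly R} := (1 - 'X) ^+ 2 * (a - x)%:P + (1 - 'X) * 'X * (K - x * M)%:P
  + 'X ^+ 2 * (b - x)%:P.
have hp t : p.[t] = complex.Re (ip (A (z t)) (z t)) - x * complex.Re (ip (z t) (z t)).
  rewrite Az /z !ReLin Qu Qv Nu Nv -/K -/M /p !hornerE; ring.
have [t t01 pt] : exists2 t, t \in `[0, 1] & p.[t] = 0.
  apply: IVT => //.
  - by apply/continuous_subspaceT => y; exact: continuous_horner.
  - rewrite !hornerE /= !subrr !(expr0n, expr1n, subr0, mul0r, mulr0, mul1r, mulr1, add0r, addr0).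
    rewrite ge_min le_max !subr_le0 !subr_ge0 ?(ltW ax) ?(ltW xb) ?orbT //.
have z0 : z t != 0.
  apply/negP => /eqP zt0.
  move: t01; rewrite in_itv /= => /andP[t0 t1].
  have [tz|tn0] := eqVneq t 0.
    move: zt0; rewrite /z tz subr0 scale0r addr0 scale1r => u0.
    by move: Nu; rewrite u0 ip0l /= => /eqP; rewrite eq_sym oner_eq0.
  have tpos : 0 < t by rewrite lt_neqAle eq_sym tn0.
  have ev : v = (- ((1 - t) / t))%:C *: u.
    apply: (@scalerI _ _ (t%:C)); first by rewrite eq_complex /= negb_and tn0.
    rewrite scalerA -rmorphM /= mulrN mulrCA mulfV ?gt_eqF // mulr1.
    by rewrite rmorphN scaleNr; apply/eqP; rewrite -addr_eq0 addrC; apply/eqP.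
  move: Nv Qv; rewrite ev AZ // !ipZZ !ReM_real Nu Qu mulr1 => -> /eqP.
  by rewrite mul1r eq_sym (gt_eqF (lt_trans ax xb)).
have := in_numrange (Dz t) z0.
have Npz := Npos z0.
move: pt; rewrite hp => /eqP; rewrite subr_eq0 => /eqP ->.
by rewrite mulfK ?gt_eqF.
Qed.
End Hilb.
Section Ediv.
Variable R : realType.
Local Open Scope ereal_scope.

Lemma ediv_le (X : \bar R) (k l b : R) : (k != 0)%R ->
  ((X - l%:E) * (k^-1)%:E <= b%:E) =
  if (0 < k)%R then X <= (k * b + l)%:E else (k * b + l)%:E <= X.
Proof.
move=> k0; case: X => [r| |].
- rewrite -EFinB -EFinM lee_fin !lee_fin; case: ifP => kp.
    rewrite ler_pdivrMr //; apply/idP/idP => h; lra.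
  have kn : (k < 0)%R by rewrite lt_neqAle k0 leNgt kp.
  rewrite ler_ndivrMr //; apply/idP/idP => h; lra.
- rewrite /= mulyr; case: ifP => kp.
    by rewrite gtr0_sg ?invr_gt0 // mul1e /=; by rewrite ?leye_eq ?leeNy_eq ?leNye ?leey.
  have kn : (k < 0)%R by rewrite lt_neqAle k0 leNgt kp.
  by rewrite ltr0_sg ?invr_lt0 // mulN1e /=; by rewrite ?leye_eq ?leeNy_eq ?leNye ?leey.
- rewrite /= mulNyr; case: ifP => kp.
    by rewrite gtr0_sg ?invr_gt0 // mul1e /=; by rewrite ?leye_eq ?leeNy_eq ?leNye ?leey.
  have kn : (k < 0)%R by rewrite lt_neqAle k0 leNgt kp.
  by rewrite ltr0_sg ?invr_lt0 // mulN1e /=; by rewrite ?leye_eq ?leeNy_eq ?leNye ?leey.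
Qed.

Lemma ediv_ge (X : \bar R) (k l b : R) : (k != 0)%R ->
  (b%:E <= (X - l%:E) * (k^-1)%:E) =
  if (0 < k)%R then (k * b + l)%:E <= X else X <= (k * b + l)%:E.
Proof.
move=> k0; case: X => [r| |].
- rewrite -EFinB -EFinM lee_fin !lee_fin; case: ifP => kp.
    rewrite ler_pdivlMr //; apply/idP/idP => h; lra.
  have kn : (k < 0)%R by rewrite lt_neqAle k0 leNgt kp.
  rewrite ler_ndivlMr //; apply/idP/idP => h; lra.
- rewrite /= mulyr; case: ifP => kp.
    by rewrite gtr0_sg ?invr_gt0 // mul1e /=; by rewrite ?leye_eq ?leeNy_eq ?leNye ?leey.
  have kn : (k < 0)%R by rewrite lt_neqAle k0 leNgt kp.
  by rewrite ltr0_sg ?invr_lt0 // mulN1e /=; by rewrite ?leye_eq ?leeNy_eq ?leNye ?leey.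
- rewrite /= mulNyr; case: ifP => kp.
    by rewrite gtr0_sg ?invr_gt0 // mul1e /=; by rewrite ?leye_eq ?leeNy_eq ?leNye ?leey.
  have kn : (k < 0)%R by rewrite lt_neqAle k0 leNgt kp.
  by rewrite ltr0_sg ?invr_lt0 // mulN1e /=; by rewrite ?leye_eq ?leeNy_eq ?leNye ?leey.
Qed.

Lemma minmax_itv (x y g : \bar R) : x <= y ->
  ((x <= g) || (y <= g)) && ((g <= x) || (g <= y)) = (x <= g <= y).
Proof.
move=> xy; apply/idP/idP.
  case/andP => /orP[xg|yg] /orP[gx|gy]; rewrite ?xg ?gy //=.
  - by rewrite (le_trans gx xy).
  - by rewrite (le_trans xy yg) (le_trans gx xy).
  - by rewrite (le_trans xy yg).
by case/andP => -> ->; rewrite orbT.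
Qed.
End Ediv.
Section OmA.
Variables (R : realType) (WA : set R).
Hypotheses (WA0 : WA !=set0)
  (conv : forall a b x, WA a -> WA b -> a < x < b -> WA x).

Lemma OA_cl x : OmegaA WA (x%:E)%E -> closure WA x.
Proof.
move=> h U nU.
have : nbhs (x%:E)%E (fun y : \bar R => U (fine y)).
  by apply/nbhs_EFin.
move=> /h [_ [[r Wr <-]]] /= Ur; by exists r.
Qed.

Lemma cl_OA x : closure WA x -> OmegaA WA (x%:E)%E.
Proof.
move=> h U /nbhs_EFin nU.
have [r [Wr Ur]] := h _ nU; exists (r%:E)%E; split => //; by exists r.
Qed.

Lemma OA_bounds X : OmegaA WA X -> (infA WA <= X <= supA WA)%E.
Proof.
move=> h; apply/andP; split.
  have : closure [set (x%:E)%E | x in WA] `<=` [set y | infA WA <= y]%E.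
    rewrite [X in _ `<=` X](closure_id _).1; last exact: closed_ereal_le_ereal.
    apply: closureS => _ [r Wr <-]; apply: ereal_inf_lbound; by exists r.
  by apply.
have : closure [set (x%:E)%E | x in WA] `<=` [set y | y <= supA WA]%E.
  rewrite [X in _ `<=` X](closure_id _).1; last exact: closed_ereal_ge_ereal.
  apply: closureS => _ [r Wr <-]; apply: ereal_sup_ubound; by exists r.
by apply.
Qed.

Lemma infA_le_supA : (infA WA <= supA WA)%E.
Proof.
case: WA0 => a Wa; apply: (@le_trans _ _ (a%:E)%E).
  apply: ereal_inf_lbound; by exists a.
apply: ereal_sup_ubound; by exists a.
Qed.

Lemma closure_inf' (A : set R) : A !=set0 -> has_lbound A -> closure A (inf A).
Proof.
move=> A0 lA U /nbhs_ballP[e e0 sub].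
have [a Aa ha] := inf_adherent e0 (conj A0 lA).
exists a; split => //; apply: sub.
have := ge_inf lA Aa; rewrite /ball /= => h.
rewrite distrC ger0_norm ?subr_ge0 //; lra.
Qed.

Lemma OA_iff x : OmegaA WA (x%:E)%E <-> (infA WA <= x%:E <= supA WA)%E.
Proof.
split; first exact: OA_bounds.
move=> /andP[h1 h2].
have [e1|l1] := eqVneq (infA WA) (x%:E)%E.
  apply: cl_OA.
  have lb : has_lbound WA.
    exists x => y Wy; rewrite -lee_fin -e1; apply: ereal_inf_lbound; by exists y.
  move: e1; rewrite /infA ereal_inf_EFin // => -[<-]; exact: closure_inf'.
have [e2|l2] := eqVneq (supA WA) (x%:E)%E.
  apply: cl_OA.
  have ub : has_ubound WA.
    exists x => y Wy; rewrite -lee_fin -e2; apply: ereal_sup_ubound; by exists y.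
  move: e2; rewrite /supA ereal_sup_EFin // => -[<-]; exact: closure_sup.
have lt1 : (infA WA < x%:E)%E by rewrite lt_neqAle l1 h1.
have lt2 : (x%:E < supA WA)%E by rewrite lt_neqAle eq_sym l2 h2.
have [_ [a Wa <-] ax] := ereal_inf_lt lt1.
have [_ [b Wb <-] xb] := ereal_sup_gt lt2.
apply/cl_OA/subset_closure; apply: (conv Wa Wb); by rewrite -!lte_fin ax xb.
Qed.
End OmA.
Lemma cl_poly (R : realType) (S : set R) (p : {poly R}) m x :
  closure S x -> (forall y, S y -> m <= p.[y]) -> m <= p.[x].
Proof.
move=> cx h.
have : closure S `<=` [set y | m <= p.[y]].
  rewrite [X in _ `<=` X](closure_id _).1; first exact: closureS.
  apply: (@preimage_closed _ _ (horner p) [set z | m <= z]); last exact: closed_ge.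
  move=> z _; exact: continuous_horner.
by apply.
Qed.

Definition ff (R : realType) (c d : R) (w : R[i]) (a b : R) :=
  (b * kI c d w + lI w) ^+ 2 + (a - kR c d w * b - lR w) ^+ 2.

Section Main.
Variables (R : realType) (c d : R) (w : R[i]) (WA WB : set R) (eps : R).
Hypotheses (WA0 : WA !=set0)
  (conv : forall a b x, WA a -> WA b -> a < x < b -> WA x)
  (WB0 : WB !=set0) (heps : 0 < eps).

Local Notation kR := (kR c d w).
Local Notation kI := (kI c d w).
Local Notation lR := (lR w).
Local Notation lI := (lI w).
Local Notation ff := (ff c d w).

Lemma ff_ge0 a b : 0 <= ff a b.
Proof. by rewrite /ff addr_ge0 ?sqr_ge0. Qed.

Lemma sq_lt x : 0 <= x -> (Num.sqrt x < eps) = (x < eps ^+ 2).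
Proof.
move=> x0; have s0 := sqrtr_ge0 x; have s2 := sqr_sqrtr x0.
apply/idP/idP => h; first by rewrite -s2; nra.
rewrite ltNge; apply/negP => hh; rewrite -s2 !expr2 in h.
have := ler_pM (ltW heps) (ltW heps) hh hh.
lra.
Qed.

Definition Feas := exists a b, [/\ OmegaA WA (a%:E)%E, OmegaB WB b &
  Num.sqrt (ff a b) < eps].

Lemma main_k0 binf bsup bop : kR = 0 ->
  Feas <-> (eps0 c d WA WB w binf bsup bop < eps%:E)%E.
Proof.
move=> k0; rewrite /eps0 k0 eqxx lte_fin.
set SB := [set (b * kI + lI) ^+ 2 | b in WB].
set SA := [set (a - lR) ^+ 2 | a in WA].
have lSB : has_lbound SB by exists 0 => _ [b _ <-]; exact: sqr_ge0.
have lSA : has_lbound SA by exists 0 => _ [b _ <-]; exact: sqr_ge0.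
have nSB : SB !=set0 by case: WB0 => b Wb; exists ((b * kI + lI) ^+ 2); exists b.
have nSA : SA !=set0 by case: WA0 => b Wb; exists ((b - lR) ^+ 2); exists b.
have iB0 : 0 <= inf SB by apply: lb_le_inf => // _ [b _ <-]; exact: sqr_ge0.
have iA0 : 0 <= inf SA by apply: lb_le_inf => // _ [b _ <-]; exact: sqr_ge0.
have ffE a b : ff a b = (b * kI + lI) ^+ 2 + (a - lR) ^+ 2.
  by rewrite /ff k0 mul0r subr0.
split.
  move=> [a [b [OA OB]]]; rewrite ffE => lt.
  apply: le_lt_trans lt; rewrite ler_sqrt ?addr_ge0 ?sqr_ge0 //.
  apply: lerD.
    have := @cl_poly _ WB (('X * kI%:P + lI%:P) ^+ 2) (inf SB) b OB.
    rewrite !hornerE; apply => y Wy; rewrite !hornerE.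
    by apply: ge_inf => //; exists y.
  have := @cl_poly _ WA (('X - lR%:P) ^+ 2) (inf SA) a (OA_cl OA).
  rewrite !hornerE; apply => y Wy; rewrite !hornerE.
  by apply: ge_inf => //; exists y.
rewrite sq_lt ?addr_ge0 // => lt.
set del := (eps ^+ 2 - (inf SB + inf SA)) / 2.
have del0 : 0 < del by rewrite /del divr_gt0 // subr_gt0.
have [_ [b Wb <-] hb] := inf_adherent del0 (conj nSB lSB).
have [_ [a Wa <-] ha] := inf_adherent del0 (conj nSA lSA).
exists a, b; split.
- exact/cl_OA/subset_closure.
- exact: subset_closure.
- rewrite sq_lt ?ff_ge0 // ffE.
  have : (b * kI + lI) ^+ 2 + (a - lR) ^+ 2 < inf SB + inf SA + 2 * del.
    lra.
  by rewrite /del; lra.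
Qed.
End Main.
Lemma sq_abs_le (R : realType) (u v : R) : `|u| <= `|v| -> u ^+ 2 <= v ^+ 2.
Proof.
move=> h; rewrite -[u ^+ 2](real_normK (num_real u)) -[v ^+ 2](real_normK (num_real v)).
by rewrite !expr2; apply: ler_pM => //; exact: normr_ge0.
Qed.

Section Main2.
Variables (R : realType) (c d : R) (w : R[i]) (WA WB : set R) (eps : R).
Hypotheses (WA0 : WA !=set0)
  (conv : forall a b x, WA a -> WA b -> a < x < b -> WA x)
  (WB0 : WB !=set0) (heps : 0 < eps).

Local Notation kR := (kR c d w).
Local Notation kI := (kI c d w).
Local Notation lR := (lR w).
Local Notation lI := (lI w).
Local Notation ff := (ff c d w).
Local Notation kabs2 := (kabs2 c d w).

Lemma Bset_iff b : kR != 0 ->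
  Bset c d WA w b <-> (infA WA <= (kR * b + lR)%:E <= supA WA)%E.
Proof.
move=> k0; rewrite /Bset /= ge_min le_max !ediv_le // !ediv_ge //.
have h := infA_le_supA WA0.
case kp : (0 < kR); first by rewrite minmax_itv.
by rewrite andbC minmax_itv.
Qed.

Lemma target_fin ia : target c d w (ia%:E)%E =
  ((- (kI * lI - kR * (ia - lR))) / kabs2)%:E%E.
Proof. by []. Qed.

Lemma quad ia y1 y2 : kR != 0 ->
  ff ia y2 - ff ia y1 =
  kabs2 * ((y2 - (- (kI * lI - kR * (ia - lR))) / kabs2) ^+ 2
         - (y1 - (- (kI * lI - kR * (ia - lR))) / kabs2) ^+ 2).
Proof.
move=> k0; have kp : kabs2 != 0.
  by rewrite /kabs2 paddr_eq0 ?sqr_ge0 // negb_and sqrf_eq0 k0.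
rewrite /ff; move: kp; rewrite /kabs2 => kp; field.
exact: kp.
Qed.
End Main2.
Section Main3.
Variables (R : realType) (c d : R) (w : R[i]) (WA WB : set R) (eps : R).
Hypotheses (WA0 : WA !=set0)
  (conv : forall a b x, WA a -> WA b -> a < x < b -> WA x)
  (WB0 : WB !=set0) (heps : 0 < eps).

Local Notation kR := (kR c d w).
Local Notation kI := (kI c d w).
Local Notation lR := (lR w).
Local Notation lI := (lI w).
Local Notation ff := (ff c d w).
Local Notation kabs2 := (kabs2 c d w).

Lemma main_kn0 binf bsup bop : kR != 0 ->
  eps0_choices c d WA WB w binf bsup bop ->
  Feas c d w WA WB eps <-> (eps0 c d WA WB w binf bsup bop < eps%:E)%E.
Proof.
move=> k0 /(_ k0) [cinf csup hop].
set m1 := term c d w (infA WA) binf.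
set m2 := term c d w (supA WA) bsup.
set m3 := term c d w ((bop * kR + lR)%:E)%E bop.
have e0a : BW c d WA WB w = set0 -> eps0 c d WA WB w binf bsup bop = Order.min m1 m2.
  move=> E; rewrite /eps0 (negbTE k0) /=.
  by destruct (pselect (BW c d WA WB w = set0)).
have e0b : BW c d WA WB w <> set0 ->
    eps0 c d WA WB w binf bsup bop = Order.min (Order.min m1 m2) m3.
  move=> E; rewrite /eps0 (negbTE k0) /=.
  by destruct (pselect (BW c d WA WB w = set0)).
have G X b : (infA WA <= X <= supA WA)%E -> OmegaB WB b ->
    (term c d w X b < eps%:E)%E -> Feas c d w WA WB eps.
  case: X => [r| |] hX hb /=; try by rewrite ltNge leey.
  rewrite lte_fin => lt; exists r, b; split => //.
  exact: ((OA_iff WA0 conv r).2 hX).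
have iAs := infA_le_supA WA0.
split; last first.
  have [E|BWn] := pselect (BW c d WA WB w = set0).
    rewrite e0a // gt_min => /orP[].
      by apply: G; [rewrite lexx iAs | exact: cinf.1].
    by apply: G; [rewrite lexx iAs | exact: csup.1].
  have BWn' : BW c d WA WB w !=set0 by apply/set0P/eqP.
  have [[Bbop OBbop] _] := hop BWn'.
  rewrite e0b // !gt_min => /orP[/orP[]|].
  - by apply: G; [rewrite lexx iAs | exact: cinf.1].
  - by apply: G; [rewrite lexx iAs | exact: csup.1].
  - apply: G => //; rewrite mulrC; exact/(Bset_iff WA0).
move=> [a [b [OA OB lt]]].
suff key : (eps0 c d WA WB w binf bsup bop <= (Num.sqrt (ff a b))%:E)%E.
  by apply: le_lt_trans key _; rewrite lte_fin.
have le12 : (eps0 c d WA WB w binf bsup bop <= Order.min m1 m2)%E.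
  have [E|E] := pselect (BW c d WA WB w = set0); first by rewrite e0a.
  by rewrite e0b // ge_min lexx.
have [Bb|nBb] := pselect (Bset c d WA w b).
  have BWb : BW c d WA WB w b by split.
  have BWn : BW c d WA WB w !=set0 by exists b.
  have [hb1 hb2] := hop BWn.
  rewrite e0b; last by move=> E; move: BWb; rewrite E.
  rewrite ge_min; apply/orP; right.
  rewrite /m3 /= lee_fin ler_sqrt ?ff_ge0 //.
  rewrite (_ : bop * kR + lR - kR * bop - lR = 0); last by ring.
  rewrite expr0n /= addr0.
  have h1 : (bop * kI + lI) ^+ 2 <= (b * kI + lI) ^+ 2.
    have [kI0|kIn] := eqVneq kI 0; first by rewrite kI0 !mulr0 !add0r.
    have := (hb2 kIn).2 b BWb.
    rewrite -!EFinB !abse_EFin lee_fin => hc.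
    have eq y : y * kI + lI = kI * (y - (- lI / kI)) by field.
    rewrite !eq !exprMn; apply: ler_wpM2l; first exact: sqr_ge0.
    exact: sq_abs_le.
  by apply: (le_trans h1); rewrite /ff lerDl sqr_ge0.
move: nBb; rewrite (Bset_iff WA0 _ k0) => /negP; rewrite negb_and -!ltNge.
have /andP[ba1 ba2] := OA_bounds OA.
move=> /orP[h|h].
- move: cinf le12 ba1 h; rewrite /m1; case E: (infA WA) => [ia| |] //=.
  + rewrite target_fin => -[_ cl] le12; rewrite !lee_fin !lte_fin => iaa h.
    apply: (le_trans le12); rewrite ge_min lee_fin ler_sqrt ?ff_ge0 //.
    apply/orP; left.
    have := cl b OB; rewrite -!EFinB !abse_EFin lee_fin => /sq_abs_le hc.
    apply: (@le_trans _ _ (ff ia b)).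
      change (ff ia binf <= ff ia b).
      rewrite -subr_ge0 quad // mulr_ge0 ?subr_ge0 //.
      by rewrite /kabs2 addr_ge0 ?sqr_ge0.
    rewrite /ff lerD2l; nra.
- move: csup le12 ba2 h; rewrite /m2; case E: (supA WA) => [sa| |] //=.
  + rewrite target_fin => -[_ cl] le12; rewrite !lee_fin !lte_fin => aas h.
    apply: (le_trans le12); rewrite ge_min lee_fin ler_sqrt ?ff_ge0 //.
    apply/orP; right.
    have := cl b OB; rewrite -!EFinB !abse_EFin lee_fin => /sq_abs_le hc.
    apply: (@le_trans _ _ (ff sa b)).
      change (ff sa bsup <= ff sa b).
      rewrite -subr_ge0 quad // mulr_ge0 ?subr_ge0 //.
      by rewrite /kabs2 addr_ge0 ?sqr_ge0.
    rewrite /ff lerD2l; nra.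
Qed.
End Main3.
Section Cx2.
Variables (R : realType) (c d : R).
Local Open Scope complex_scope.

Lemma Re_lin (a b : R) (l z : R[i]) :
  complex.Re (a%:C - l - z * b%:C) = a - complex.Re z * b - complex.Re l.
Proof. case: l z => l1 l2 [z1 z2] /=. simpc. ring. Qed.
Lemma Im_lin (a b : R) (l z : R[i]) :
  complex.Im (a%:C - l - z * b%:C) = - (b * complex.Im z + complex.Im l).
Proof. case: l z => l1 l2 [z1 z2] /=. simpc. ring. Qed.

Lemma tnorm (w : R[i]) (eps a b : R) :
  (`|tfun c d a b w| < eps%:C) = (Num.sqrt (ff c d w a b) < eps).
Proof.
rewrite normc_def ltcR /tfun Re_lin Im_lin sqrrN addrC.
by rewrite /ff /kR /kI /lR /lI /kappa /lambda.
Qed.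

Lemma iC2 : iC R * iC R = -1 :> R[i].
Proof. by apply/eqP; rewrite eq_complex /=; simpc. Qed.

Lemma psqrt2 (x : R) : psqrt x * psqrt x = x%:C.
Proof.
rewrite /psqrt; case: ifP => x0.
  by rewrite -rmorphM /= -expr2 sqr_sqrtr.
have xn : 0 <= - x by rewrite oppr_ge0 ltW // ltNge x0.
rewrite mulrACA iC2 -rmorphM /= -expr2 sqr_sqrtr //.
by rewrite mulN1r -rmorphN opprK.
Qed.

Lemma denom_fact (w : R[i]) :
  denom c d w = - ((w - delta_p c d) * (w - delta_m c d)).
Proof.
rewrite /denom /delta_p /delta_m.
have hs := psqrt2 (c - d ^+ 2 / 4).
move: (psqrt (c - d ^+ 2 / 4)) hs => s hs.
have hd : d%:C = (d / 2)%:C + (d / 2)%:C by rewrite -rmorphD /= -splitr.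
have hc : c%:C = s * s + (d / 2)%:C * (d / 2)%:C.
  by rewrite hs -rmorphM -rmorphD /=; congr (_%:C); field.
rewrite {1}hc hd; move: ((d / 2)%:C) => h.
apply/eqP; rewrite -subr_eq0.
have -> : s * s + h * h - iC R * (h + h) * w - w ^+ 2 -
   - ((w - (s - iC R * h)) * (w - (- s - iC R * h))) = (iC R * iC R + 1) * (h * h).
  by ring.
by rewrite iC2 addNr mul0r.
Qed.

Lemma denom_neq0 (w : R[i]) : calC c d w -> denom c d w != 0.
Proof.
move=> [hp hm]; rewrite denom_fact oppr_eq0 mulf_eq0 !subr_eq0.
by apply/norP; split; apply/eqP.
Qed.

Lemma tfun0 (w : R[i]) a b : calC c d w -> pfun c d a b w = 0 -> tfun c d a b w = 0.
Proof.
move=> hw p0; have dn := denom_neq0 hw.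
have -> : tfun c d a b w = pfun c d a b w / denom c d w.
  by rewrite /tfun /pfun; field.
by rewrite p0 mul0r.
Qed.

Lemma Weps_Feas (WA WB : set R) (eps : R) (w : R[i]) : calC c d w -> 0 < eps ->
  Weps c d WA WB eps w <-> Feas c d w WA WB eps.
Proof.
move=> hw heps; split.
  case=> [[[a [b [OA OB p0]]]|[_ [e|e]]]|[_ _ [a [b [OA OB lt]]]]].
  - exists a, b; split => //; rewrite -tnorm tfun0 // normr0 ltcR //.
  - by case: hw.
  - by case: hw.
  - by exists a, b; split => //; rewrite -tnorm.
move=> [a [b [OA OB lt]]].
have [Wo|nWo] := pselect (WOmega c d WA WB w); first by left.
right; split => //; exists a, b; split => //; by rewrite tnorm.
Qed.
End Cx2.

Theorem proposition4p5 (R : realType) (H : lmodType R[i]) (ip : H -> H -> R[i])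
  (D : set H) (A : H -> H) (B : H -> H) (c d : R)
  (hH : is_hilbert ip) (hA : selfadjoint ip D A)
  (hB : bounded_selfadjoint ip B) (hB0 : exists x, B x != 0)
  (hc : 0 <= c) (hd : 0 < d)
  (w : R[i]) (hw : calC c d w) (eps : R) (heps : 0 < eps)
  (binf bsup bop : R)
  (hch : eps0_choices c d (numrangeR ip D A) (numrangeR ip (fun _ => True) B)
           w binf bsup bop) :
  Weps c d (numrangeR ip D A) (numrangeR ip (fun _ => True) B) eps w <->
  (eps0 c d (numrangeR ip D A) (numrangeR ip (fun _ => True) B) w
     binf bsup bop < eps%:E)%E.
Proof.
move: hA hB => [HD0 HDl HAl dens adj] [Bl _ Bsym].
have Hsym : forall x, D x -> ip (A x) x = ip x (A x).
  by move=> x Dx; exact: ((adj x (A x)).2 (conj Dx erefl)) x Dx.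
have BD0 : (fun _ : H => True) 0 by [].
have BDl : forall (a : R[i]) (x y : H), (fun _ : H => True) x ->
    (fun _ : H => True) y -> (fun _ : H => True) (a *: x + y) by [].
have BAl : forall (a : R[i]) (x y : H), (fun _ : H => True) x ->
    (fun _ : H => True) y -> B (a *: x + y) = a *: B x + B y.
  by move=> a x y _ _; exact: Bl.
have BSym : forall x, (fun _ : H => True) x -> ip (B x) x = ip x (B x).
  by move=> x _; exact: Bsym.
case: hB0 => x0 Bx0.
have x00 : x0 != 0.
  by apply: contraNneq Bx0 => ->; apply/eqP; exact: (A0 BD0 BAl).
have WB0 : numrangeR ip (fun _ => True) B !=set0.
  by eexists; exact: (in_numrange hH BD0 BDl BAl BSym (I : (fun _ : H => True) x0) x00).
have e0 : 0 < hnorm ip x0 by rewrite /hnorm sqrtr_gt0 Npos.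
have [y Dy hy] := dens x0 _ e0.
have y0 : y != 0.
  by apply/eqP => y0; move: hy; rewrite y0 subr0 ltxx.
have WA0 : numrangeR ip D A !=set0.
  by eexists; exact: (in_numrange hH HD0 HDl HAl Hsym Dy y0).
have conv := numrange_conv hH HD0 HDl HAl Hsym.
rewrite Weps_Feas //.
have [k0|k0] := eqVneq (kR c d w) 0.
  exact: main_k0.
exact: main_kn0.
Qed.
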